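(* Let $\mathcal{X}$ be a probability distribution over a set of queries, $k \geq 1$, and $\hat q_1,\dots,\hat q_k,\hat c_1,\dots,\hat c_k : \mathcal{X} \to \mathbb{R}$ integrable functions. Let $0 \leq \lambda_1 < \lambda_2$ and let $s^{(1)} \in S_{\lambda_1}$, $s^{(2)} \in S_{\lambda_2}$ be arbitrary. Then $$\mathbb{E}_{x \sim \mathcal{X}}\left[\sum_{i=1}^k s^{(1)}_i(x)\hat c_i(x)\right] \geqslant \mathbb{E}_{x \sim \mathcal{X}}\left[\sum_{i=1}^k s^{(2)}_i(x)\hat c_i(x)\right].$$
   Context: A routing strategy is a measurable function $s : \mathcal{X} \to \mathbb{R}^k$ with $s_i(x) \geq 0$ for all $i$ and $\sum_{i=1}^k s_i(x) = 1$ for all $x$. For $\lambda \in \mathbb{R}^+$, $S_\lambda$ is the set of routing strategies $s$ such that for all $x \in \mathcal{X}$ and $i \in \{1,\dots,k\}$: if $\hat q_i(x) - \lambda \hat c_i(x) < \max_j(\hat q_j(x) - \lambda \hat c_j(x))$ then $s_i(x) = 0$. *)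

(* Defs.v *)
From mathcomp Require Import all_boot all_order all_algebra.
From mathcomp Require Import all_classical all_reals all_analysis.
Set Implicit Arguments. Unset Strict Implicit. Unset Printing Implicit Defensive.
Import Order.TTheory GRing.Theory Num.Theory.
Local Open Scope ring_scope.

(* A routing strategy s : X -> R^k, given componentwise (s i x = s_i(x)),
   indices 1..k rendered as 'I_k. *)
Definition routing_strategy {d} {T : measurableType d} {R : realType} {k : nat}
  (s : 'I_k -> T -> R) : Prop :=
  (forall i, measurable_fun setT (s i)) /\
  (forall x i, 0 <= s i x) /\
  (forall x, \sum_(i < k) s i x = 1).

(* max_j (q_j(x) - lam c_j(x)); the index set contains i, so using the
   i-th value as the neutral element of the big max gives exactly the max. *)
Definition score {T} {R : realType} {k : nat} (q c : 'I_k -> T -> R) (lam : R)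
  (j : 'I_k) (x : T) : R := q j x - lam * c j x.

Definition in_S {d} {T : measurableType d} {R : realType} {k : nat}
  (q c : 'I_k -> T -> R) (lam : R) (s : 'I_k -> T -> R) : Prop :=
  routing_strategy s /\
  forall x i,
    score q c lam i x < \big[Num.max/score q c lam i x]_(j < k) score q c lam j x ->
    s i x = 0.

(* Main.v *)
Require Import Defs.
From mathcomp Require Import all_boot all_order all_algebra.
From mathcomp Require Import all_classical all_reals all_analysis.
From mathcomp Require Import lra.
Import Order.TTheory GRing.Theory Num.Theory.
Local Open Scope ring_scope.

Lemma score_max {T} {R : realType} {k : nat} (q c : 'I_k -> T -> R) lam
  (s : 'I_k -> T -> R) (hs : forall x i,
    score q c lam i x < \big[Num.max/score q c lam i x]_(j < k) score q c lam j x ->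
    s i x = 0) x i j : s i x != 0 -> score q c lam j x <= score q c lam i x.
Proof.
move=> nz.
set M := (\big[Num.max/score q c lam i x]_(j0 < k) score q c lam j0 x).
have [h|h] := leP M (score q c lam i x).
  exact: le_trans (le_bigmax _ _ j) h.
by move: nz; rewrite (hs x i h) eqxx.
Qed.

Lemma pointwise {T} {R : realType} {k : nat} (q c : 'I_k -> T -> R)
  (lam1 lam2 : R) (h12 : lam1 < lam2) (s1 s2 : 'I_k -> T -> R)
  (p1 : forall x i, 0 <= s1 i x) (p2 : forall x i, 0 <= s2 i x)
  (u1 : forall x, \sum_(i < k) s1 i x = 1) (u2 : forall x, \sum_(i < k) s2 i x = 1)
  (hs1 : forall x i,
    score q c lam1 i x < \big[Num.max/score q c lam1 i x]_(j < k) score q c lam1 j x ->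
    s1 i x = 0)
  (hs2 : forall x i,
    score q c lam2 i x < \big[Num.max/score q c lam2 i x]_(j < k) score q c lam2 j x ->
    s2 i x = 0) x :
  \sum_(i < k) s2 i x * c i x <= \sum_(i < k) s1 i x * c i x.
Proof.
have E2 : \sum_(j < k) s2 j x * c j x =
   \sum_(i < k) \sum_(j < k) s1 i x * s2 j x * c j x.
  rewrite -[LHS]mul1r -(u1 x) mulr_suml; apply: eq_bigr => i _.
  rewrite mulr_sumr; apply: eq_bigr => j _; by rewrite mulrA.
have E1 : \sum_(i < k) s1 i x * c i x =
   \sum_(i < k) \sum_(j < k) s1 i x * s2 j x * c i x.
  by apply: eq_bigr => i _; rewrite -mulr_suml -mulr_sumr u2 mulr1.
rewrite E1 E2; apply: ler_sum => i _; apply: ler_sum => j _.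
have [z1|nz1] := eqVneq (s1 i x) 0; first by rewrite z1 !mul0r.
have [z2|nz2] := eqVneq (s2 j x) 0; first by rewrite z2 mulr0 !mul0r.
apply: ler_wpM2l; first by rewrite mulr_ge0.
have a := @score_max _ _ _ q c lam1 s1 hs1 x i j nz1.
have b := @score_max _ _ _ q c lam2 s2 hs2 x j i nz2.
move: a b; rewrite /score => a b.
have : (lam2 - lam1) * (c j x - c i x) <= 0 by nra.
rewrite pmulr_rle0 ?subr_gt0 // subr_le0 //.
Qed.

Lemma int_strat d (T : measurableType d) (R : realType)
  (P : probability T R) (k : nat) (c s : 'I_k -> T -> R)
  (hc : forall i, P.-integrable setT (EFin \o c i))
  (hs : routing_strategy s) :
  P.-integrable setT (fun x => (\sum_(i < k) s i x * c i x)%:E).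
Proof.
case: hs => [ms [p u]].
apply: (eq_integrable measurableT (fun x => \sum_(i < k) ((EFin \o s i) \* (EFin \o c i)) x)%E).
  by move=> x _; rewrite sumEFin.
apply: (integrable_sum measurableT) => i _; apply: (integrableMr measurableT) => //.
exists 1; split => // M hM x _ /=.
have : s i x <= 1.
  rewrite -(u x) (bigD1 i) //= lerDl; exact: sumr_ge0.
rewrite ger0_norm // => h; apply: le_trans h _; exact: ltW.
Qed.

Theorem lemma3 (d : measure_display) (T : measurableType d) (R : realType)
  (P : probability T R) (k : nat) (hk : (0 < k)%N)
  (q c : 'I_k -> T -> R)
  (hq : forall i, P.-integrable setT (EFin \o q i))
  (hc : forall i, P.-integrable setT (EFin \o c i))
  (lam1 lam2 : R) (h1 : 0 <= lam1) (h12 : lam1 < lam2)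
  (s1 s2 : 'I_k -> T -> R)
  (hs1 : in_S q c lam1 s1) (hs2 : in_S q c lam2 s2) :
  (\int[P]_x (\sum_(i < k) s2 i x * c i x)%:E
     <= \int[P]_x (\sum_(i < k) s1 i x * c i x)%:E)%E.
Proof.
have i1 := @int_strat _ _ _ P k c s1 hc hs1.1; have i2 := @int_strat _ _ _ P k c s2 hc hs2.1.
case: hs1 => [[_ [p1 u1]] h1']; case: hs2 => [[_ [p2 u2]] h2'].
apply: le_integral => // x _; rewrite lee_fin.
exact: (@pointwise _ _ _ q c lam1 lam2 h12 s1 s2 p1 p2 u1 u2 h1' h2' x).
Qed.
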